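(* Let $n\ge1$ be an integer and let $c_0,g_2,g_3$ be arbitrary constants. Let $C(p)=-n(n+1)p+c_0$ and let $A(p)=\sum_{i=0}^{n}a_ip^i$ be a polynomial with $a_n=1$. Then $A$ satisfies the polynomial identity $$(4p^{3}-g_2p-g_3)A'''(p)+\left(18p^{2}-\tfrac{3g_2}{2}\right)A''(p)+4(3p+C(p))A'(p)+2A(p)C'(p)=0$$ if and only if its coefficients are given by $$a_{n-1}=\frac{c_0}{2n-1},\qquad a_{n-2}=\frac{\left(8c_0^{2}-ng_2(2n-1)^{2}\right)(n-1)}{8(2n-3)(2n-1)^{2}}\ \ (\text{for } n\ge2),$$ and, for $i=n-3,n-4,\ldots,0$, $$a_i=\frac{\left((2i^{2}+10i+12)a_{i+3}g_3+(2i^{2}+7i+6)a_{i+2}g_2-8c_0a_{i+1}\right)(i+1)}{4(i+n+1)(2i+1)(i-n)}.$$ In particular, for all values of $c_0,g_2,g_3$, the function $z(x)=A(\wp(x))$ is a solution of the Lie equation $z'''+4wz'+2w'z=0$ for the potential $w(x)=-n(n+1)\wp(x)+c_0$, where $\wp$ is the Weierstrass function with invariants $g_2,g_3$.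
   Context: The Weierstrass function $\wp(x)$ satisfies $(\wp')^2=4\wp^3-g_2\wp-g_3$ with invariants $g_2,g_3$. For a potential $w(x)=C(\wp(x))$ and a candidate symmetry $z(x)=A(\wp(x))$ with $C,A$ polynomials, substituting into the Lie equation $z'''+4wz'+2w'z=0$ and using the Weierstrass ODE, the Lie equation becomes $\wp'(x)$ times the displayed polynomial expression evaluated at $p=\wp(x)$; so $z$ is a symmetry exactly when the displayed polynomial identity in $p$ holds. *)

(* Defs.v *)
From mathcomp Require Import all_boot all_order all_algebra.
Set Implicit Arguments. Unset Strict Implicit. Unset Printing Implicit Defensive.
Import GRing.Theory.
Local Open Scope ring_scope.

Definition Cpot (R : nzRingType) (n : nat) (c0 : R) : {poly R} :=
  - ((n * n.+1)%N%:R *: 'X) + c0%:P.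

Definition lie_poly (R : fieldType) (n : nat) (c0 g2 g3 : R) (A : {poly R})
  : {poly R} :=
  let C := Cpot n c0 in
  (4%:R *: 'X^3 - g2 *: 'X - g3%:P) * A^`(3)
  + (18%:R *: 'X^2 - (3%:R * g2 / 2%:R)%:P) * A^`(2)
  + 4%:R *: ((3%:R *: 'X + C) * A^`())
  + 2%:R *: (A * C^`()).

(* Main.v *)
Require Import Defs.
From mathcomp Require Import all_boot all_order all_algebra ring zify.
Import GRing.Theory.
Local Open Scope ring_scope.
Set Implicit Arguments.

Definition F2 (R : fieldType) (n : nat) (c0 g2 g3 : R) (A : {poly R}) (k : nat) : R :=
  4%:R * (2*k+1)%N%:R * (k%:R - n%:R) * (k + n + 1)%N%:R * A`_k
  + 8%:R * c0 * (k+1)%N%:R * A`_k.+1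
  - g2 * ((k+1)*(k+2)*(2*k+3))%N%:R * A`_k.+2
  - 2%:R * g3 * ((k+1)*(k+2)*(k+3))%N%:R * A`_k.+3.

Lemma coef_lie (R : fieldType) (n : nat) (c0 g2 g3 : R) (A : {poly R}) k :
  2%:R != 0 :> R ->
  2%:R * (lie_poly n c0 g2 g3 A)`_k = F2 n c0 g2 g3 A k.
Proof.
move=> h2.
rewrite /lie_poly /Cpot /F2.
rewrite !derivnS derivn0 !derivD !derivN !derivZ derivC derivX ?addr0 ?scaler0 ?subr0.
rewrite mulrN mulr_algr.
rewrite !mulrDl ?mulrBl ?mulNr -!scalerAl !coefD ?coefB ?coefN !coefZ !coefXnM !coefXM !coefCM.
rewrite ?coefMC !coef_deriv.
rewrite !coefD ?coefN !coefZ ?coefXM ?coefCM ?coef_deriv.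
case: k => [|[|[|k]]] /=; rewrite ?subSS ?subn0.
all: field; exact: h2.

Qed.

Lemma lin_solve (R : fieldType) (x y c : R) : c != 0 -> c * (x - y) = 0 -> x = y.
Proof. by move=> hc /eqP; rewrite mulf_eq0 (negbTE hc) /= subr_eq0 => /eqP. Qed.

Arguments lin_solve {R x y} c.

Lemma natr_neq0 (R : fieldType) : [pchar R] =i pred0 -> forall m, (0 < m)%N -> m%:R != 0 :> R.
Proof. by move=> /pcharf0P h m hm; rewrite h -lt0n. Qed.

Lemma subr_nat_neq0 (R : fieldType) : [pchar R] =i pred0 ->
  forall a b, (a < b)%N -> a%:R - b%:R != 0 :> R.
Proof.
move=> hc a b hab; rewrite -(subnKC (ltnW hab)) natrD opprD addrA subrr add0r oppr_eq0.
apply: natr_neq0 => //; lia.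
Qed.

Theorem theorem5 (R : fieldType) (charR0 : [pchar R] =i pred0)
  (n : nat) (hn : (1 <= n)%N) (c0 g2 g3 : R) (A : {poly R})
  (hsize : size A = n.+1) (hlead : lead_coef A = 1) :
  lie_poly n c0 g2 g3 A = 0 <->
  [/\ A`_(n.-1) = c0 / (2 * n - 1)%N%:R,
      (2 <= n)%N ->
        A`_(n.-2) = (8%:R * c0 ^+ 2 - n%:R * g2 * ((2 * n - 1)%N%:R) ^+ 2)
                    * (n.-1)%:R
                    / (8%:R * (2 * n - 3)%N%:R * ((2 * n - 1)%N%:R) ^+ 2)
    & forall i : nat, (i + 3 <= n)%N ->
        A`_i = ((2 * i ^ 2 + 10 * i + 12)%N%:R * A`_(i + 3) * g3
                + (2 * i ^ 2 + 7 * i + 6)%N%:R * A`_(i + 2) * g2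
                - 8%:R * c0 * A`_(i + 1)) * (i + 1)%N%:R
               / (4%:R * (i + n + 1)%N%:R * (2 * i + 1)%N%:R
                  * (i%:R - n%:R))].
Proof.
have h0 := natr_neq0 charR0.
have h2 : 2%:R != 0 :> R by apply: h0.
have hz : forall j, (n < j)%N -> A`_j = 0.
  by move=> j hj; apply: nth_default; rewrite hsize.
have han : A`_n = 1 by move: hlead; rewrite lead_coefE hsize.
have hF : lie_poly n c0 g2 g3 A = 0 <-> forall k, (k < n)%N -> F2 n c0 g2 g3 A k = 0.
  split.
    by move=> hl k _; rewrite -coef_lie // hl coef0 mulr0.
  move=> H; apply/polyP => k; rewrite coef0.
  have hk : F2 n c0 g2 g3 A k = 0.
    case: (ltnP k n) => hkn; first exact: H.
    rewrite /F2 (hz k.+1); last lia.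
    rewrite (hz k.+2); last lia.
    rewrite (hz k.+3); last lia.
    have [->|hne] := eqVneq k n; first ring.
    rewrite (hz k); last lia.
    ring.
  by move: hk; rewrite -coef_lie // => /eqP; rewrite mulf_eq0 (negbTE h2) /= => /eqP.
rewrite hF; clear hF.
split.
- move=> H.
  have P1 : forall m, n = m.+1 -> A`_m * (2* m+1)%N%:R = c0.
    move=> m hm; subst n.
    apply: (lin_solve (- (8%:R * m.+1%:R))).
      by rewrite oppr_eq0 mulf_neq0 // h0.
    apply: (etrans _ (H m (ltnSn m))).
    rewrite /F2 (hz m.+2) // (hz m.+3) // han.
    ring.
  split.
  + have [m hm] : exists m, n = m.+1 by exists n.-1; lia.
    rewrite hm (_ : (2* m.+1 - 1 = 2* m+1)%N); last lia.
    have hD : (2* m+1)%N%:R != 0 :> R by apply: h0; lia.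
    apply: (canRL (mulfK hD)); exact: P1.
  + move=> hn2.
    have [m hm] : exists m, n = m.+2 by exists n.-2; lia.
    have P1' := P1 m.+1 hm.
    subst n.
    rewrite (_ : (2* m.+2 - 1 = 2* m+3)%N); last lia.
    rewrite (_ : (2* m.+2 - 3 = 2* m+1)%N); last lia.
    rewrite (_ : m.+2.-1 = m.+1) // (_ : m.+2.-2 = m) //.
    have hD : 8%:R * (2* m+1)%N%:R * ((2* m+3)%N%:R)^+2 != 0 :> R.
      by rewrite !mulf_neq0 ?expf_neq0 ?h0 //; lia.
    apply: (canRL (mulfK hD)).
    apply: (lin_solve (1)); first exact: oner_neq0.
    have E : 1 * (A`_m * (8%:R * (2* m+1)%N%:R * ((2* m+3)%N%:R)^+2) -
       (8%:R * c0 ^+ 2 - (m.+2)%:R * g2 * ((2* m+3)%N%:R) ^+ 2) * (m.+1)%:R)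
      = - (2* m+3)%N%:R * F2 m.+2 c0 g2 g3 A m
        + 8%:R * c0 * m.+1%:R * (A`_m.+1 * (2* m.+1+1)%N%:R - c0).
      rewrite /F2 (hz m.+3) // han; ring.
    by rewrite E H // P1' subrr; ring.
  + move=> i hi.
    have hD : 4%:R * (i + n + 1)%N%:R * (2 * i + 1)%N%:R * (i%:R - n%:R) != 0 :> R.
      rewrite !mulf_neq0 ?h0 //; try lia.
      apply: subr_nat_neq0 => //; lia.
    apply: (canRL (mulfK hD)).
    apply: (lin_solve (1)); first exact: oner_neq0.
    apply: (etrans _ (H i _)); last lia.
    rewrite /F2 !addn3 !addn2 !addn1.
    ring.
- case=> h1 h2' h3 k hk.
  have : (k = n.-1 \/ k = n.-2 /\ (2 <= n)%N) \/ (k + 3 <= n)%N by lia.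
  case=> [[hk1|[hk2 hn2]]|hk3].
  + have [m hm] : exists m, n = m.+1 by exists n.-1; lia.
    subst n k.
    rewrite (_ : (2* m.+1 - 1 = 2* m+1)%N) in h1; last lia.
    rewrite /F2 (hz m.+2) // (hz m.+3) // han h1.
    field.
    rewrite (_ : 2 * _ + 1 = (2 * m + 1)%N%:R :> R); first by apply: h0; lia.
    by rewrite natrD natrM.
  + have [m hm] : exists m, n = m.+2 by exists n.-2; lia.
    subst n; have -> : k = m by rewrite hk2.
    have h2'' := h2' hn2.
    rewrite (_ : (2 * m.+2 - 1 = 2 * m + 3)%N) in h1 h2''; last lia.
    rewrite (_ : (2 * m.+2 - 3 = 2 * m + 1)%N) in h2''; last lia.
    rewrite (_ : m.+2.-1 = m.+1) // in h1 h2''.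
    rewrite (_ : m.+2.-2 = m) // in h2''.
    rewrite /F2 (hz m.+3) // han h2'' h1.
    field.
    have e3 : 2 * m%:R + 3 = (2 * m + 3)%N%:R :> R by rewrite natrD natrM.
    have e1 : 2 * m%:R + 1 = (2 * m + 1)%N%:R :> R by rewrite natrD natrM.
    rewrite e3 e1 !h0 //; lia.
  + rewrite /F2 (h3 k hk3) !addn3 !addn2 !addn1.
    field.
    have e1 : 1 + 2 * k%:R = (2 * k + 1)%N%:R :> R by rewrite natrD natrM addrC.
    have e2 : 1 + (k%:R + n%:R) = (k + n + 1)%N%:R :> R by rewrite !natrD addrC.
    rewrite (subr_nat_neq0 charR0 _ _ hk) e1 e2 !h0 //; lia.
Qed.
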